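(* For every $j \geq 1$, the partial function $\xi_j$ preserves both $\rho_1$ and $\rho_C$, i.e. $\xi_j \in \mathrm{pPol}\,\rho_1$ and $\xi_j\in\mathrm{pPol}\,\rho_C$.
   Context: Partial functions are on $\{0,1\}$: an $n$-ary partial function is a map $f:\operatorname{dom} f\to\{0,1\}$ with $\operatorname{dom} f\subseteq\{0,1\}^n$. For a relation $\rho\subseteq\{0,1\}^h$, $f$ preserves $\rho$ ($f\in\mathrm{pPol}\,\rho$) if for every $h\times n$ matrix whose rows lie in $\operatorname{dom} f$ and whose columns lie in $\rho$, the column obtained by applying $f$ to each row lies in $\rho$. Let $n(k,p)=(2k-1)p+1$ for $k\ge2$, $p\ge1$; $\tau^k_p$ is the $n(k,p)$-ary partial function with domain $\{(1,\dots,1)\}\cup\{\mathbf{x}\in\{0,1\}^{n(k,p)}:\mathbf{x}\text{ has at most }p\text{ entries equal to }1\}$, taking value $1$ at $(1,\dots,1)$ and $0$ elsewhere on its domain. Let $p_1=1$, $p_j=n(j,p_{j-1})$ for $j\ge2$, and $\xi_j=\tau^{j+1}_{p_j}$. $\rho_C\subseteq\{0,1\}^4$ consists of the tuples $(0,0,0,0),(0,0,1,1),(0,1,0,1),(1,1,1,1)$; $\rho_1\subseteq\{0,1\}^4$ consists of $(0,0,0,0),(0,0,1,1),(0,1,0,1),(1,0,1,0),(1,1,0,0),(1,1,1,1)$. *)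

(* Defs.v *)
From mathcomp Require Import all_boot.
Set Implicit Arguments. Unset Strict Implicit. Unset Printing Implicit Defensive.

Definition bvec (n : nat) := {ffun 'I_n -> bool}.

(* An n-ary partial function on {0,1}: a domain and a map (only its values
   on the domain matter). *)
Record pfun (n : nat) := PFun {
  pdom : pred (bvec n);
  pval : bvec n -> bool }.

Definition brel (h : nat) := pred (bvec h).

Definition preserves (n h : nat) (f : pfun n) (rho : brel h) : Prop :=
  forall M : 'I_h -> 'I_n -> bool,
    (forall i : 'I_h, pdom f [ffun j => M i j]) ->
    (forall j : 'I_n, rho [ffun i => M i j]) ->
    rho [ffun i => pval f [ffun j => M i j]].

Definition nkp (k p : nat) : nat := (2 * k - 1) * p + 1.

Definition ones (n : nat) (x : bvec n) : nat := #|[pred j | x j]|.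

Definition all_ones (n : nat) (x : bvec n) : bool := [forall j, x j].

Definition tau (k p : nat) : pfun (nkp k p) :=
  @PFun (nkp k p) (fun x => all_ones x || (ones x <= p)) (fun x => all_ones x).

(* p_1 = 1, p_j = n(j, p_{j-1}) for j >= 2; indexed so that pseq j = p_j for j >= 1. *)
Fixpoint pseq (j : nat) : nat :=
  match j with
  | 0 => 1 (* unused *)
  | 1 => 1
  | S j' => nkp j (pseq j')
  end.

Definition xi (j : nat) : pfun (nkp j.+1 (pseq j)) := tau j.+1 (pseq j).

Definition v4 (a b c d : bool) : bvec 4 :=
  [ffun i : 'I_4 => nth false [:: a; b; c; d] i].

Definition rhoC : brel 4 := fun x =>
  [|| x == v4 false false false false, x == v4 false false true true,
      x == v4 false true false true | x == v4 true true true true].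

Definition rho1 : brel 4 := fun x =>
  [|| x == v4 false false false false, x == v4 false false true true,
      x == v4 false true false true, x == v4 true false true false,
      x == v4 true true false false | x == v4 true true true true].

(* Main.v *)
Require Import Defs.
From mathcomp Require Import all_boot zify.

Definition i0 : 'I_4 := @Ordinal 4 0 isT.
Definition i1 : 'I_4 := @Ordinal 4 1 isT.
Definition i2 : 'I_4 := @Ordinal 4 2 isT.
Definition i3 : 'I_4 := @Ordinal 4 3 isT.

Lemma ffun4E (g : 'I_4 -> bool) : [ffun i => g i] = v4 (g i0) (g i1) (g i2) (g i3).
Proof.
apply/ffunP => i; rewrite !ffunE.
case: i => [[|[|[|[|?]]]] Hi] //=; congr g; exact: val_inj.
Qed.

Lemma and_rule n (x y z : bvec n) :
  (forall j, x j -> y j -> z j) -> all_ones x -> all_ones y -> all_ones z.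
Proof.
move=> H /forallP hx /forallP hy; apply/forallP => j; exact: H.
Qed.

Lemma cover_rule n p (x y z : bvec n) : 2 * p < n ->
  (forall j, z j -> x j || y j) -> all_ones z -> ones x <= p -> ones y <= p -> False.
Proof.
move=> hn H /forallP hz hx hy.
have e : #|[predU [pred j | x j] & [pred j | y j]]| = n.
  rewrite -[RHS](card_ord n); apply: eq_card => j /=; rewrite !inE.
  by have := H j (hz j).
have := cardUI [pred j | x j] [pred j | y j].
rewrite e /ones in hx hy *. move=> h.
have : n <= #|[pred j | x j]| + #|[pred j | y j]| by rewrite -h leq_addr.
move=> h2; lia.
Qed.

Lemma v4E a b c d a' b' c' d' :
  (v4 a b c d == v4 a' b' c' d') = [&& a==a', b==b', c==c' & d==d'].
Proof.
apply/eqP/and4P => [e|[/eqP-> /eqP-> /eqP-> /eqP->]] //.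
have h i := congr1 (fun f : bvec 4 => f i) e.
move: (h i0) (h i1) (h i2) (h i3); rewrite !ffunE /= => -> -> -> ->.
by rewrite !eqxx.
Qed.

Lemma rhoCv a b c d : rhoC (v4 a b c d) =
  [|| ~~a&&~~b&&~~c&&~~d, ~~a&&~~b&&c&&d, ~~a&&b&&~~c&&d | a&&b&&c&&d].
Proof. by rewrite /rhoC /rho1 !v4E; case: a; case: b; case: c; case: d. Qed.

Lemma rho1v a b c d : rho1 (v4 a b c d) =
  [|| ~~a&&~~b&&~~c&&~~d, ~~a&&~~b&&c&&d, ~~a&&b&&~~c&&d, a&&~~b&&c&&~~d,
      a&&b&&~~c&&~~d | a&&b&&c&&d].
Proof. by rewrite /rhoC /rho1 !v4E; case: a; case: b; case: c; case: d. Qed.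

Ltac colt M col := let j := fresh "j" in move=> j; rewrite !ffunE; move: (col j); rewrite ffun4E ?rhoCv ?rho1v;
  case: (M i0 j); case: (M i1 j); case: (M i2 j); case: (M i3 j); by [].

Ltac solve_case M hn col :=
  first [ done
  | match goal with
    | e1 : all_ones ?X = true, e2 : all_ones ?Y = true, e3 : all_ones ?Z = false |- _ =>
        exfalso; move: (@and_rule _ X Y Z ltac:(colt M col) e1 e2); by rewrite e3
    end
  | match goal with
    | e3 : all_ones ?Z = true, f1 : is_true (leq (ones ?X) _), f2 : is_true (leq (ones ?Y) _) |- _ =>
        exfalso; apply: (@cover_rule _ _ X Y Z hn _ e3 f1 f2); colt M col
    end ].

Lemma tau_pres k p : 2 * p < nkp k p ->
  preserves (tau k p) rho1 /\ preserves (tau k p) rhoC.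
Proof.
move=> hn; split=> M Hdom Hcol; rewrite ffun4E /=;
rewrite ?rhoCv ?rho1v;
have D0 := Hdom i0; have D1 := Hdom i1; have D2 := Hdom i2; have D3 := Hdom i3;
rewrite /= in D0 D1 D2 D3;
case E0: (all_ones [ffun j => M i0 j]) D0 => /= D0;
case E1: (all_ones [ffun j => M i1 j]) D1 => /= D1;
case E2: (all_ones [ffun j => M i2 j]) D2 => /= D2;
case E3: (all_ones [ffun j => M i3 j]) D3 => /= D3;
solve_case M hn Hcol.
Qed.

Theorem mainTheorem15 :
  forall j : nat, 1 <= j -> preserves (xi j) rho1 /\ preserves (xi j) rhoC.
Proof.
move=> j hj; apply: tau_pres; rewrite /nkp addn1 ltnS leq_mul2r.
apply/orP; right; lia.
Qed.
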